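(* Let $A_1,\dots,A_m\in\mathbb{S}^n$, $b\in\mathbb{R}^m$, $C\in\mathbb{S}^n$, let Assumption 1 hold for some $p$, and assume $\mathcal{C}$ is compact. Let $f^\star$ be the optimal value of (SDP) and $R=\max_{X\in\mathcal{C}}\operatorname{tr}(X)<\infty$. For any $Y\in\mathcal{M}_p$, if $\|\operatorname{grad}g(Y)\|\le\varepsilon_g$ and $S(Y)\succeq-\frac{\varepsilon_H}{2}I_n$, then $0\le2(g(Y)-f^\star)\le\varepsilon_HR+\varepsilon_g\sqrt{R}$. If $I_n\in\operatorname{im}(\mathcal{A}^* )$, the right-hand side can be replaced by $\varepsilon_HR$; this holds in particular if all $X\in\mathcal{C}$ have the same trace and $\mathcal{C}$ contains a positive definite matrix.
   Context: $\mathbb{S}^n$: real symmetric $n\times n$ matrices; $\langle U,V\rangle=\operatorname{tr}(U^\top V)$, $\|\cdot\|$ Frobenius norm. $\mathcal{A}(X)_i=\langle A_i,X\rangle$, $\mathcal{A}^*(\nu)=\sum_i\nu_iA_i$. $\mathcal{C}=\{X\in\mathbb{S}^n:\mathcal{A}(X)=b,\ X\succeq0\}$ (non-empty); (SDP): minimize $\langle C,X\rangle$ over $\mathcal{C}$. $\mathcal{M}_p=\{Y\in\mathbb{R}^{n\times p}:\mathcal{A}(YY^\top)=b\}$, $g(Y)=\langle CY,Y\rangle$. Assumption 1 (for $p$): either (a) $A_1Y,\dots,A_mY$ are linearly independent for all $Y\in\mathcal{M}_p$, or (b) $\operatorname{span}\{A_1Y,\dots,A_mY\}$ has constant dimension on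 an open neighborhood of $\mathcal{M}_p$ in $\mathbb{R}^{n\times p}$. For $Y\in\mathcal{M}_p$: $G_{ij}=\langle A_iY,A_jY\rangle$, $\mu=G^\dagger\mathcal{A}(CYY^\top)$, $S(Y)=C-\mathcal{A}^*(\mu)$; the Riemannian gradient is $\operatorname{grad}g(Y)=2S(Y)Y$. *)

(* Defs.v *)
From HB Require Import structures.
From mathcomp Require Import all_boot all_order all_algebra.
From mathcomp Require Import all_classical all_reals all_analysis.
Set Implicit Arguments. Unset Strict Implicit. Unset Printing Implicit Defensive.
Import Order.TTheory GRing.Theory Num.Theory numFieldNormedType.Exports.
Local Open Scope ring_scope.
Local Open Scope classical_set_scope.

Section Defs.
Variable R : realType.

Definition frob {k l : nat} (U V : 'M[R]_(k, l)) : R := \tr (U^T *m V).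
Definition frob_norm {k l : nat} (U : 'M[R]_(k, l)) : R := Num.sqrt (frob U U).

Definition sym_mx {n : nat} (X : 'M[R]_n) : Prop := X^T = X.

Definition psd {n : nat} (X : 'M[R]_n) : Prop :=
  sym_mx X /\ forall v : 'cV[R]_n, 0 <= (v^T *m X *m v) 0 0.
Definition pd {n : nat} (X : 'M[R]_n) : Prop :=
  sym_mx X /\ forall v : 'cV[R]_n, v != 0 -> 0 < (v^T *m X *m v) 0 0.

Definition calA {n m : nat} (A : 'I_m -> 'M[R]_n) (X : 'M[R]_n) : 'cV[R]_m :=
  \col_i frob (A i) X.
Definition calA_adj {n m : nat} (A : 'I_m -> 'M[R]_n) (nu : 'cV[R]_m) : 'M[R]_n :=
  \sum_i nu i 0 *: A i.

Definition feas {n m : nat} (A : 'I_m -> 'M[R]_n) (b : 'cV[R]_m) : set 'M[R]_n :=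
  [set X | calA A X = b /\ psd X].

Definition Mp {n m p : nat} (A : 'I_m -> 'M[R]_n) (b : 'cV[R]_m) : set 'M[R]_(n, p) :=
  [set Y | calA A (Y *m Y^T) = b].

Definition gobj {n p : nat} (C : 'M[R]_n) (Y : 'M[R]_(n, p)) : R := frob (C *m Y) Y.

Definition AYmx {n m p : nat} (A : 'I_m -> 'M[R]_n) (Y : 'M[R]_(n, p)) : 'M[R]_(m, n * p) :=
  \matrix_i mxvec (A i *m Y).

Definition assumption1 {n m : nat} (p : nat) (A : 'I_m -> 'M[R]_n) (b : 'cV[R]_m) : Prop :=
  (forall Y : 'M[R]_(n, p), Mp A b Y -> row_free (AYmx A Y))
  \/ (exists (U : set 'M[R]_(n, p)) (r : nat),
        open U /\ Mp A b `<=` U /\ forall Y, U Y -> \rank (AYmx A Y) = r).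

Definition gram {n m p : nat} (A : 'I_m -> 'M[R]_n) (Y : 'M[R]_(n, p)) : 'M[R]_m :=
  \matrix_(i, j) frob (A i *m Y) (A j *m Y).

Definition is_mp_pinv {k : nat} (G Gd : 'M[R]_k) : Prop :=
  [/\ G *m Gd *m G = G, Gd *m G *m Gd = Gd,
      (G *m Gd)^T = G *m Gd & (Gd *m G)^T = Gd *m G].

Definition Smat {n m p : nat} (A : 'I_m -> 'M[R]_n) (C : 'M[R]_n)
  (Y : 'M[R]_(n, p)) (Gd : 'M[R]_m) : 'M[R]_n :=
  C - calA_adj A (Gd *m calA A (C *m Y *m Y^T)).

Definition rgrad {n m p : nat} (A : 'I_m -> 'M[R]_n) (C : 'M[R]_n)
  (Y : 'M[R]_(n, p)) (Gd : 'M[R]_m) : 'M[R]_(n, p) :=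
  2 *: (Smat A C Y Gd *m Y).

End Defs.

(* Main.v *)
Require Import Defs.
From HB Require Import structures.
From mathcomp Require Import all_boot all_order all_algebra.
From mathcomp Require Import all_classical all_reals all_analysis.
From mathcomp Require Import ring lra.
Import Order.TTheory GRing.Theory Num.Theory numFieldNormedType.Exports.
Local Open Scope ring_scope.
Local Open Scope classical_set_scope.
Set Implicit Arguments. Unset Strict Implicit. Unset Printing Implicit Defensive.

Section Aux.
Variable R : realType.

Lemma mul_self_ge0 (x : R) : 0 <= x * x.
Proof. by rewrite -expr2 sqr_ge0. Qed.

Lemma frobE k l (U V : 'M[R]_(k, l)) : frob U V = \sum_i \sum_j U i j * V i j.
Proof.
rewrite /frob /mxtrace exchange_big; apply: eq_bigr => j _.
by rewrite mxE; apply: eq_bigr => i _; rewrite mxE.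
Qed.

Lemma frobC k l (U V : 'M[R]_(k, l)) : frob U V = frob V U.
Proof. by rewrite !frobE; apply: eq_bigr => i _; apply: eq_bigr => j _; rewrite mulrC. Qed.

Lemma frobDr k l (U V W : 'M[R]_(k, l)) : frob U (V + W) = frob U V + frob U W.
Proof. by rewrite /frob mulmxDr mxtraceD. Qed.
Lemma frobZr k l a (U V : 'M[R]_(k, l)) : frob U (a *: V) = a * frob U V.
Proof. by rewrite /frob -scalemxAr mxtraceZ. Qed.
Lemma frobNr k l (U V : 'M[R]_(k, l)) : frob U (- V) = - frob U V.
Proof. by rewrite /frob mulmxN linearN. Qed.
Lemma frobBr k l (U V W : 'M[R]_(k, l)) : frob U (V - W) = frob U V - frob U W.
Proof. by rewrite frobDr frobNr. Qed.
Lemma frobDl k l (U V W : 'M[R]_(k, l)) : frob (V + W) U = frob V U + frob W U.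
Proof. by rewrite frobC frobDr !(frobC U). Qed.
Lemma frobZl k l a (U V : 'M[R]_(k, l)) : frob (a *: V) U = a * frob V U.
Proof. by rewrite frobC frobZr frobC. Qed.
Lemma frobBl k l (U V W : 'M[R]_(k, l)) : frob (V - W) U = frob V U - frob W U.
Proof. by rewrite frobC frobBr !(frobC U). Qed.
Lemma frob_sumr k l (U : 'M[R]_(k, l)) m (F : 'I_m -> 'M[R]_(k, l)) :
  frob U (\sum_i F i) = \sum_i frob U (F i).
Proof.
by rewrite /frob mulmx_sumr raddf_sum.
Qed.
Lemma frob0r k l (U : 'M[R]_(k, l)) : frob U 0 = 0.
Proof. by rewrite /frob mulmx0 linear0. Qed.

Lemma frob_ge0 k l (U : 'M[R]_(k, l)) : 0 <= frob U U.
Proof. by rewrite frobE; apply: sumr_ge0 => i _; apply: sumr_ge0 => j _; apply: mul_self_ge0. Qed.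

Lemma frob_eq0 k l (U : 'M[R]_(k, l)) : frob U U = 0 -> U = 0.
Proof.
rewrite frobE => /eqP; rewrite psumr_eq0; last first.
  by move=> i _; apply: sumr_ge0 => j _; apply: mul_self_ge0.
move=> /allP H; apply/matrixP => i j; rewrite mxE.
have /implyP := H i (mem_index_enum _) => /(_ isT) /eqP.
move/eqP; rewrite psumr_eq0; last by move=> j' _; apply: mul_self_ge0.
move=> /allP /(_ j (mem_index_enum _)) /implyP /(_ isT).
by rewrite mulf_eq0 orbb => /eqP.
Qed.

Lemma frob_CS k l (U V : 'M[R]_(k, l)) : frob U V ^+ 2 <= frob U U * frob V V.
Proof.
have [c0|cpos] := eqVneq (frob V V) 0.
  by move/frob_eq0: c0 => ->; rewrite !frob0r expr0n mulr0.
have cgt0 : 0 < frob V V by rewrite lt_def cpos frob_ge0.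
have := frob_ge0 (frob V V *: U - frob U V *: V).
rewrite !(frobBl, frobBr, frobZl, frobZr) (frobC V U) => H.
have : 0 <= frob V V * (frob U U * frob V V - frob U V ^+ 2).
  by move: H; congr (_ <= _); ring.
by rewrite pmulr_rge0 // subr_ge0.
Qed.

Lemma frob_CS' k l (U V : 'M[R]_(k, l)) : frob U V <= frob_norm U * frob_norm V.
Proof.
rewrite /frob_norm -sqrtrM ?frob_ge0 //.
apply: (le_trans (ler_norm _)); rewrite -sqrtr_sqr.
by rewrite ler_sqrt ?frob_CS // mulr_ge0 ?frob_ge0.
Qed.


Definition qf n (X : 'M[R]_n) (v w : 'cV[R]_n) := (v^T *m X *m w) 0 0.

Lemma qfDl n (X : 'M[R]_n) v w z : qf X (v + w) z = qf X v z + qf X w z.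
Proof. by rewrite /qf raddfD /= !mulmxDl mxE. Qed.
Lemma qfBl n (X : 'M[R]_n) v w z : qf X (v - w) z = qf X v z - qf X w z.
Proof. by rewrite /qf raddfB /= !mulmxBl !mxE. Qed.
Lemma qfZl n (X : 'M[R]_n) c v z : qf X (c *: v) z = c * qf X v z.
Proof. by rewrite /qf linearZ /= -!scalemxAl mxE. Qed.
Lemma qfDr n (X : 'M[R]_n) v w z : qf X z (v + w) = qf X z v + qf X z w.
Proof. by rewrite /qf !mulmxDr mxE. Qed.
Lemma qfBr n (X : 'M[R]_n) v w z : qf X z (v - w) = qf X z v - qf X z w.
Proof. by rewrite /qf !mulmxBr !mxE. Qed.
Lemma qfZr n (X : 'M[R]_n) c v z : qf X z (c *: v) = c * qf X z v.
Proof. by rewrite /qf -!scalemxAr mxE. Qed.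

Lemma qf_sym n (X : 'M[R]_n) v w : sym_mx X -> qf X v w = qf X w v.
Proof.
move=> sX; rewrite /qf -[in LHS](trmxK (v^T *m X *m w)) mxE.
by rewrite !trmx_mul trmxK sX mulmxA.
Qed.

Lemma qf_delta n (X : 'M[R]_n) (i k : 'I_n) : qf X (delta_mx i 0) (delta_mx k 0) = X i k.
Proof. by rewrite /qf trmx_delta -rowE -colE !mxE. Qed.

Lemma quad0 (c d : R) : (forall t, 0 <= 2 * t * c + t ^+ 2 * d) -> 0 <= d -> c = 0.
Proof.
move=> H d0; set t := - c / (d + 1).
have d1 : d + 1 != 0 by rewrite gt_eqF // ltr_wpDl.
have ht : t * (d + 1) = - c by rewrite /t mulrVK // unitfE.
have := H t => Ht.
have : 0 <= (d + 1) ^+ 2 * (2 * t * c + t ^+ 2 * d) by rewrite mulr_ge0 // sqr_ge0.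
have -> : (d + 1) ^+ 2 * (2 * t * c + t ^+ 2 * d) =
   2 * (t * (d + 1)) * c * (d + 1) + (t * (d + 1)) ^+ 2 * d by ring.
rewrite ht => H2.
have : c ^+ 2 * (d + 2) <= 0 by move: H2; rewrite -oppr_ge0; congr (_ <= _); ring.
move=> H3; apply/eqP; rewrite -sqrf_eq0; apply/eqP/le_anti; rewrite sqr_ge0 andbT.
by move: H3; rewrite pmulr_lle0 // ltr_wpDl.
Qed.

Lemma psd_qf0 n (X : 'M[R]_n) e w : psd X -> qf X e e = 0 -> qf X w e = 0.
Proof.
move=> [sX pX] e0; apply: (@quad0 _ (qf X w w)); last exact: pX.
move=> t; have : 0 <= qf X (e + t *: w) (e + t *: w) by exact: pX.
rewrite !(qfDl, qfDr, qfZl, qfZr) e0 (qf_sym e w sX).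
by congr (_ <= _); ring.
Qed.

Lemma psd_diag0 n (X : 'M[R]_n) (k i : 'I_n) : psd X -> X k k = 0 -> X i k = 0.
Proof. by move=> pX H; rewrite -qf_delta; apply: psd_qf0; rewrite ?qf_delta. Qed.

Lemma psd_diag_ge0 n (X : 'M[R]_n) (k : 'I_n) : psd X -> 0 <= X k k.
Proof. by move=> [_ pX]; rewrite -qf_delta; apply: pX. Qed.


Lemma sym_entry n (X : 'M[R]_n) (i k : 'I_n) : sym_mx X -> X i k = X k i.
Proof. by move=> sX; rewrite -{1}sX mxE. Qed.

Lemma psd_decomp n (X : 'M[R]_n) : psd X -> exists N (L : 'M[R]_(n, N)), X = L *m L^T.
Proof.
move=> pX.
suff H : forall j (X : 'M[R]_n), psd X -> (forall i : 'I_n, (j <= i)%N -> X i i = 0) ->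
    exists N (L : 'M[R]_(n, N)), X = L *m L^T.
  by apply: (H n X pX) => i; rewrite leqNgt ltn_ord.
elim => [|j IH] {pX}X pX HX.
  exists 0%N, 0; apply/matrixP => i k; rewrite mul0mx mxE.
  exact: psd_diag0 pX (HX k (leq0n _)).
case: (ltnP j n) => [hj | hj]; last first.
  apply: IH => // i hi; exfalso.
  by move: (leq_trans hj hi); rewrite leqNgt ltn_ord.
pose k := Ordinal hj.
have [a0|an0] := eqVneq (X k k) 0.
  apply: IH => // i hi; move: hi; rewrite leq_eqVlt => /orP [/eqP ji | hi].
    by have -> : i = k by apply/val_inj; rewrite /= ji.
  exact: HX.
pose a := X k k.
have a_gt0 : 0 < a by rewrite lt_def an0 psd_diag_ge0.
pose s := (Num.sqrt a)^-1.
pose u := s *: col k X.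
pose X' := X - u *m u^T.
have uE : forall i, u i 0 = s * X i k by move=> i; rewrite !mxE.
have s2 : s * s = a^-1 by rewrite /s -invfM -expr2 sqr_sqrtr // ltW.
have X'E : forall i l : 'I_n, X' i l = X i l - s * s * X i k * X l k.
  move=> i l; rewrite !mxE big_ord1 !mxE; ring.
have pX' : psd X'.
  split; first by rewrite /sym_mx /X' raddfB /= trmx_mul trmxK (proj1 pX).
  move=> v; change (0 <= qf X' v v).
  pose e : 'cV[R]_n := delta_mx k 0.
  have qe : qf X e e = a by rewrite qf_delta.
  have vu : (v^T *m u) 0 0 = s * qf X v e.
    by rewrite /u -scalemxAr mxE colE mulmxA.
  have uv : (u^T *m v) 0 0 = s * qf X v e.
    by rewrite -vu -{1}(trmxK v) -trmx_mul mxE.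
  have -> : qf X' v v = qf X v v - (s * qf X v e) ^+ 2.
    rewrite /qf /X' mulmxBr mulmxBl [in LHS]mxE [X in _ + X]mxE; congr (_ - _).
    by rewrite mulmxA -(mulmxA _ _ v) mxE big_ord1 vu uv expr2.
  pose c := qf X v e / a.
  have : 0 <= qf X (v - c *: e) (v - c *: e) by exact: (proj2 pX).
  rewrite !(qfBl, qfBr, qfZl, qfZr) (qf_sym e v (proj1 pX)) qe.
  have an : a != 0 by rewrite gt_eqF.
  move=> H; apply: (le_trans H); rewrite le_eqVlt; apply/orP; left; apply/eqP.
  rewrite exprMn [s ^+ 2]expr2 s2 /c; field; exact: an.
have HX' : forall i : 'I_n, (j <= i)%N -> X' i i = 0.
  move=> i hi; rewrite X'E; move: hi; rewrite leq_eqVlt => /orP [/eqP ji | hi].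
    have -> : i = k by apply/val_inj; rewrite /= ji.
    rewrite s2 -/a; field; by rewrite gt_eqF.
  have Hii := HX i hi.
  have Hki : X i k = 0.
    rewrite sym_entry; [exact: (@psd_diag0 _ X i k pX Hii) | exact: (proj1 pX)].
  by rewrite Hii Hki !mulr0 subr0.
have [N [L' HL']] := IH X' pX' HX'.
exists (N + 1)%N, (row_mx L' u).
by rewrite tr_row_mx mul_row_col -HL' /X' subrK.
Qed.


Lemma qf_colk n N (P : 'M[R]_n) (M : 'M[R]_(n, N)) k :
  (M^T *m P *m M) k k = qf P (col k M) (col k M).
Proof.
rewrite /qf !mxE; apply: eq_bigr => j _; rewrite !mxE; congr (_ * _).
by apply: eq_bigr => l _; rewrite !mxE.
Qed.

Lemma psd_frob_ge0 n (P X : 'M[R]_n) : psd P -> psd X -> 0 <= frob P X.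
Proof.
move=> [sP pP] pX; have [N [L ->]] := psd_decomp pX.
rewrite /frob sP mulmxA mxtrace_mulC mulmxA /mxtrace; apply: sumr_ge0 => k _.
by rewrite qf_colk; apply: pP.
Qed.


Lemma frob_mulYT k l q (M : 'M[R]_(k, l)) (N : 'M[R]_(k, q)) (Y : 'M[R]_(l, q)) :
  frob M (N *m Y^T) = frob (M *m Y) N.
Proof. by rewrite /frob mulmxA mxtrace_mulC trmx_mul mulmxA. Qed.

Lemma trace_frob1 n (X : 'M[R]_n) : frob 1%:M X = \tr X.
Proof. by rewrite /frob trmx1 mul1mx. Qed.

Lemma frob_col n (v w : 'cV[R]_n) : frob v w = (v^T *m w) 0 0.
Proof. by rewrite /frob /mxtrace big_ord1. Qed.

Lemma psd_YYT n p (Y : 'M[R]_(n, p)) : psd (Y *m Y^T).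
Proof.
split; first by rewrite /sym_mx trmx_mul trmxK.
move=> v; have := frob_ge0 (Y^T *m v); rewrite frob_col.
by rewrite trmx_mul trmxK !mulmxA.
Qed.

Lemma tr_YYT n p (Y : 'M[R]_(n, p)) : \tr (Y *m Y^T) = frob Y Y.
Proof. by rewrite /frob mxtrace_mulC. Qed.

Lemma frob_suml k l (U : 'M[R]_(k, l)) m (F : 'I_m -> 'M[R]_(k, l)) :
  frob (\sum_i F i) U = \sum_i frob (F i) U.
Proof. by rewrite frobC frob_sumr; apply: eq_bigr => i _; rewrite frobC. Qed.

Lemma frob_adj n m (A : 'I_m -> 'M[R]_n) nu X :
  frob (calA_adj A nu) X = \sum_i nu i 0 * (calA A X) i 0.
Proof. by rewrite /calA_adj frob_suml; apply: eq_bigr => i _; rewrite frobZl mxE. Qed.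

Lemma calAB n m (A : 'I_m -> 'M[R]_n) X Z t :
  calA A (X - t *: Z) = calA A X - t *: calA A Z.
Proof. by apply/matrixP => i j; rewrite !mxE frobBr frobZr. Qed.


Lemma gram_range n m p (A : 'I_m -> 'M[R]_n) (Y : 'M[R]_(n, p)) Gd (c : 'M[R]_(n, p)) :
  is_mp_pinv (gram A Y) Gd ->
  gram A Y *m (Gd *m (\col_i frob (A i *m Y) c)) = \col_i frob (A i *m Y) c.
Proof.
move=> [H1 H2 H3 H4].
set G := gram A Y; set h := \col_i _.
pose T (w : 'cV[R]_m) := \sum_i w i 0 *: (A i *m Y).
have Tc : forall w, frob (T w) c = (w^T *m h) 0 0.
  by move=> w; rewrite frob_suml mxE; apply: eq_bigr => i _; rewrite frobZl !mxE.
have TT : forall w w', frob (T w) (T w') = (w^T *m (G *m w')) 0 0.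
  move=> w w'; rewrite frob_suml mxE; apply: eq_bigr => i _.
  rewrite frobZl !mxE frob_sumr; congr (_ * _); apply: eq_bigr => j _.
  by rewrite frobZr !mxE mulrC.
have GT : G^T = G by apply/matrixP => i j; rewrite !mxE frobC.
pose Q := 1%:M - G *m Gd.
have QT : Q^T = Q by rewrite /Q raddfB /= trmx1 H3.
have QG : Q *m G = 0 by rewrite /Q mulmxBl mul1mx H1 subrr.
have GQ : G *m Q = 0 by rewrite -[G *m Q]trmxK trmx_mul QT GT QG trmx0.
have GdQ : Gd *m Q = 0 by rewrite /Q mulmxBr mulmx1 mulmxA H2 subrr.
have QQ : Q *m Q = Q by rewrite {1}/Q mulmxBl mul1mx -mulmxA GdQ mulmx0 subr0.
pose w := Q *m h.
have Tw : T w = 0.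
  by apply: frob_eq0; rewrite TT /w (mulmxA G Q h) GQ mul0mx mulmx0 mxE.
have : frob w w = 0.
  rewrite frob_col.
  have -> : w^T *m w = w^T *m h.
    by rewrite /w trmx_mul QT mulmxA -(mulmxA _ Q Q) QQ.
  by rewrite -Tc Tw frobC frob0r.
move/frob_eq0 => w0.
have e : h - G *m Gd *m h = 0 by rewrite -w0 /w /Q mulmxBl mul1mx.
by rewrite mulmxA; apply/eqP; rewrite eq_sym -subr_eq0 e.
Qed.


Lemma frob_col_sum N (w : 'cV[R]_N) : frob w w = \sum_i w i 0 ^+ 2.
Proof. by rewrite frobE; apply: eq_bigr => i _; rewrite big_ord1 expr2. Qed.

Lemma qf_bound N (W : 'M[R]_N) (w : 'cV[R]_N) :
  `|qf W w w| <= (\sum_i \sum_j `|W i j|) * frob w w.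
Proof.
set F := frob w w.
have wi : forall i, w i 0 ^+ 2 <= F.
  move=> i; rewrite /F frob_col_sum (bigD1 i) //= lerDl.
  by apply: sumr_ge0 => j _; apply: sqr_ge0.
have wij : forall i j, `|w i 0| * `|w j 0| <= F.
  move=> i j; rewrite -normrM ler_norml; have := wi i; have := wi j.
  move=> hj hi; apply/andP; split; nra.
have -> : qf W w w = \sum_i \sum_j w i 0 * W i j * w j 0.
  rewrite /qf mxE; under eq_bigr => j _ do rewrite mxE mulr_suml.
  rewrite exchange_big; apply: eq_bigr => i _; apply: eq_bigr => j _.
  by rewrite !mxE.
apply: (le_trans (ler_norm_sum _ _ _)); rewrite mulr_suml; apply: ler_sum => i _.
apply: (le_trans (ler_norm_sum _ _ _)); rewrite mulr_suml; apply: ler_sum => j _.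
rewrite !normrM mulrAC mulrC; apply: ler_wpM2l; [exact: normr_ge0 | exact: wij].
Qed.


Lemma qf_subX n (X Z : 'M[R]_n) t v w : qf (X - t *: Z) v w = qf X v w - t * qf Z v w.
Proof. by rewrite /qf mulmxBr mulmxBl -scalemxAr -scalemxAl !mxE. Qed.

Lemma pd_perturb n (X0 Z : 'M[R]_n) : pd X0 -> sym_mx Z ->
  exists2 t, 0 < t & psd (X0 - t *: Z).
Proof.
move=> [sX pX] sZ.
have psX : psd X0.
  split => // v; case: (eqVneq v 0) => [->|/pX/ltW //].
  by rewrite mulmx0 mxE.
have [N [L HL]] := psd_decomp psX.
have rf : row_free L.
  apply: inj_row_free => v vL; apply/eqP/negPn/negP => vn0.
  have vT : v^T != 0 by rewrite trmx_eq0.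
  have := pX _ vT; rewrite HL trmxK mulmxA vL !mul0mx mxE.
  by rewrite ltxx.
have [M LM] := row_freeP rf.
pose W := M *m Z *m M^T.
pose K := \sum_i \sum_j `|W i j|.
have K0 : 0 <= K by apply: sumr_ge0 => i _; apply: sumr_ge0 => j _; exact: normr_ge0.
have K1 : 0 < K + 1 by rewrite ltr_wpDl.
exists (K + 1)^-1; first by rewrite invr_gt0.
split; first by rewrite /sym_mx raddfB /= linearZ /= sX sZ.
move=> v; pose wv := L^T *m v.
have vE : v = M^T *m wv by rewrite /wv mulmxA -trmx_mul LM trmx1 mul1mx.
change (0 <= qf (X0 - (K + 1)^-1 *: Z) v v).
rewrite qf_subX.
have -> : qf X0 v v = frob wv wv.
  by rewrite frob_col /wv /qf HL trmx_mul trmxK !mulmxA.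
have -> : qf Z v v = qf W wv wv.
  by rewrite {1 2}vE /qf /W trmx_mul trmxK !mulmxA.
have hb := qf_bound W wv; have hn := ler_norm (qf W wv wv).
rewrite subr_ge0 ler_pdivrMl //.
apply: (le_trans hn); apply: (le_trans hb); rewrite ler_wpM2r ?frob_ge0 //.
by rewrite lerDl.
Qed.


Lemma frob_mxvec k l (U V : 'M[R]_(k, l)) : frob U V = (mxvec U *m (mxvec V)^T) 0 0.
Proof.
rewrite frobE mxE pair_bigA /= (reindex _ (curry_mxvec_bij _ _)) /=.
by apply: eq_bigr => [[i j]] _ /=; rewrite !mxE !mxvecE.
Qed.

Lemma frob_trr n (U V : 'M[R]_n) : sym_mx U -> frob U V^T = frob U V.
Proof.
move=> sU; rewrite /frob -trmx_mul mxtrace_tr mxtrace_mulC.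
by rewrite sU.
Qed.

Lemma mul_col_entry a b c (M : 'M[R]_(a, b)) (N : 'M[R]_(b, c)) i k :
  (M *m col k N) i 0 = (M *m N) i k.
Proof. by rewrite !mxE; apply: eq_bigr => j _; rewrite !mxE. Qed.

Lemma adj_one n m (A : 'I_m -> 'M[R]_n) : (forall i, sym_mx (A i)) ->
  (forall Z, sym_mx Z -> calA A Z = 0 -> \tr Z = 0) -> exists nu, calA_adj A nu = 1%:M.
Proof.
move=> sA HZ.
pose J : 'M[R]_(m, n * n) := \matrix_i mxvec (A i).
pose K := cokermx J.
have JK : J *m K = 0 := mulmx_coker J.
have Jrow : forall Z i, (J *m (mxvec Z)^T) i 0 = frob (A i) Z.
  move=> Z i; rewrite frob_mxvec !mxE; apply: eq_bigr => k _; rewrite !mxE.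
  done.
have HK : mxvec (1%:M : 'M[R]_n) *m K = 0.
  apply/matrixP => i k; rewrite [i]ord1 [RHS]mxE.
  pose Zk := vec_mx (col k K)^T.
  have mZ : (mxvec Zk)^T = col k K by rewrite vec_mxK trmxK.
  have aZ : calA A Zk = 0.
    apply/matrixP => i' j'; rewrite [j']ord1 !mxE -Jrow mZ colE mulmxA JK mul0mx mxE.
    done.
  have sZ : sym_mx (Zk + Zk^T) by rewrite /sym_mx raddfD /= trmxK addrC.
  have aZ2 : calA A (Zk + Zk^T) = 0.
    apply/matrixP => i' j'; move: aZ => /matrixP /(_ i' j'); rewrite !mxE.
    by rewrite frobDr frob_trr // => ->; rewrite addr0.
  have := HZ _ sZ aZ2; rewrite mxtraceD mxtrace_tr => trZ.
  have trZ0 : \tr Zk = 0 by lra.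
  by rewrite -trZ0 -trace_frob1 frob_mxvec mZ mul_col_entry.
have : (mxvec (1%:M : 'M[R]_n) <= J)%MS by rewrite submxE HK.
case/submxP => D HD.
exists D^T.
rewrite -[1%:M]mxvecK HD mulmx_sum_row linear_sum /calA_adj; apply: eq_bigr => i _.
by rewrite linearZ /= rowK mxvecK mxE.
Qed.

End Aux.

Unset Implicit Arguments.

Lemma conj4 (R : realType) (n m : nat) (A : 'I_m -> 'M[R]_n) (b : 'cV[R]_m) :
  (forall i, sym_mx (A i)) ->
  (forall X X', feas A b X -> feas A b X' -> \tr X = \tr X') ->
  (exists2 X, feas A b X & pd X) -> exists nu, calA_adj A nu = 1%:M.
Proof.
move=> sA Htr' [X0 fX0 pX0]; apply: adj_one => // Z sZ aZ.
have [t t0 pt] := pd_perturb pX0 sZ.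
have f1 : feas A b (X0 - t *: Z).
  by split; [rewrite calAB aZ scaler0 subr0; exact: (proj1 fX0) | exact: pt].
have := Htr' _ _ f1 fX0; rewrite raddfB /= mxtraceZ => H.
have : t * \tr Z = 0 by move: H; set u := t * _; lra.
by move/eqP; rewrite mulf_eq0 gt_eqF //= => /eqP.
Qed.

Theorem lemma4 (R : realType) (n m p : nat) (A : 'I_m -> 'M[R]_n) (b : 'cV[R]_m)
  (C : 'M[R]_n) (fstar Rtr : R) :
  (forall i, sym_mx (A i)) -> sym_mx C ->
  assumption1 p A b ->
  feas A b !=set0 ->
  compact (feas A b) ->
  (* fstar is the optimal value of (SDP) *)
  (exists2 X, feas A b X & frob C X = fstar) ->
  (forall X, feas A b X -> fstar <= frob C X) ->
  (* Rtr = max of the trace over the feasible set *)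
  (exists2 X, feas A b X & \tr X = Rtr) ->
  (forall X, feas A b X -> \tr X <= Rtr) ->
  forall (eps_g eps_H : R), 0 <= eps_g -> 0 <= eps_H ->
  forall (Y : 'M[R]_(n, p)) (Gd : 'M[R]_m), Mp A b Y -> is_mp_pinv (gram A Y) Gd ->
  frob_norm (rgrad A C Y Gd) <= eps_g ->
  psd (Smat A C Y Gd + (eps_H / 2) *: 1%:M) ->
  [/\ 0 <= 2 * (gobj C Y - fstar),
      2 * (gobj C Y - fstar) <= eps_H * Rtr + eps_g * Num.sqrt Rtr,
      (exists nu, calA_adj A nu = 1%:M) -> 2 * (gobj C Y - fstar) <= eps_H * Rtr
    & ((forall X X', feas A b X -> feas A b X' -> \tr X = \tr X') ->
       (exists2 X, feas A b X & pd X) ->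
       exists nu, calA_adj A nu = 1%:M)].
Proof.
move=> sA sC _ _ _ [Xs fXs HXs] Hopt _ Htr eg eH eg0 eH0 Y Gd HY Hpinv Hgrad HpsdS.
pose S := Smat A C Y Gd.
pose mu := Gd *m calA A (C *m Y *m Y^T).
have SE : S = C - calA_adj A mu by [].
have fY : feas A b (Y *m Y^T) by split; [exact: HY | exact: psd_YYT].
have key : forall X, feas A b X -> frob C X = frob S X + \sum_i mu i 0 * b i 0.
  by move=> X [aX _]; rewrite SE frobBl frob_adj aX subrK.
have gY : gobj C Y = frob C (Y *m Y^T) by rewrite frob_mulYT.
have diff : gobj C Y - fstar = frob (S *m Y) Y - frob S Xs.
  by rewrite gY -HXs (key _ fY) (key _ fXs) frob_mulYT; ring.
have hX : - frob S Xs <= eH / 2 * Rtr.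
  have := psd_frob_ge0 HpsdS (proj2 fXs); rewrite frobDl frobZl trace_frob1 => H.
  have := Htr _ fXs => H2.
  have : eH / 2 * \tr Xs <= eH / 2 * Rtr by rewrite ler_wpM2l // divr_ge0.
  by move: H; rewrite -/S; set u := eH / 2 * _; lra.
have hY : 2 * frob (S *m Y) Y <= eg * Num.sqrt Rtr.
  rewrite -frobZl; apply: le_trans (frob_CS' _ _) _.
  have fYY : frob Y Y <= Rtr by rewrite -tr_YYT; exact: Htr _ fY.
  have R0 : 0 <= Rtr by exact: le_trans (frob_ge0 Y) fYY.
  apply: ler_pM; [exact: sqrtr_ge0 | exact: sqrtr_ge0 | exact: Hgrad | ].
  by rewrite /frob_norm ler_sqrt.
split.
- by rewrite gY; have := Hopt _ fY; lra.
- rewrite diff; move: hX hY; set u := eH / 2 * Rtr; set w := eg * _.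
  have -> : eH * Rtr = 2 * u by rewrite /u; field.
  lra.
- move=> [nu Hnu].
  have Ye : Y = \sum_i nu i 0 *: (A i *m Y).
    rewrite -{1}(mul1mx Y) -Hnu /calA_adj mulmx_suml.
    by apply: eq_bigr => i _; rewrite scalemxAl.
  have hG := gram_range (C *m Y) Hpinv.
  have hE : calA A (C *m Y *m Y^T) = \col_i frob (A i *m Y) (C *m Y).
    by apply/matrixP => i j; rewrite !mxE frob_mulYT.
  have z : frob (S *m Y) Y = 0.
    have -> : frob (S *m Y) Y = frob (S *m Y) (\sum_i nu i 0 *: (A i *m Y)) by rewrite -Ye.
    rewrite frob_sumr big1 // => i _; rewrite frobZr frobC.
    suff -> : frob (A i *m Y) (S *m Y) = 0 by rewrite mulr0.
    rewrite SE mulmxBl frobBr /calA_adj mulmx_suml.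
    have Ei : \sum_j frob (A i *m Y) (A j *m Y) * mu j 0 = frob (A i *m Y) (C *m Y).
      transitivity ((gram A Y *m mu) i 0).
        by rewrite [RHS]mxE; apply: eq_bigr => j _; rewrite [gram A Y i j]mxE.
      by rewrite /mu hE hG mxE.
    rewrite frob_sumr -Ei; apply/eqP; rewrite subr_eq0; apply/eqP; apply: eq_bigr => j _.
    by rewrite -scalemxAl frobZr mulrC.
  rewrite diff z; move: hX; set u := eH / 2 * Rtr.
  have -> : eH * Rtr = 2 * u by rewrite /u; field.
  lra.
- exact: conj4.
Qed.
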